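(* Let $\mathcal H$ be the $5$-uniform hypergraph defined below, let $e,f$ be two edges of $\mathcal H$, and let $\phi : V(\mathcal{H}_{ef}) \to V(\mathcal{H})$ be a monomorphism. If $b, e_5 \in \mathcal{H}_{ef}$, then $\phi(v_9) = v_9$.
   Context: $\mathcal{H}$ has vertex set $\{z, v_1,\dots,v_9\}$ and edges $r=\{z,v_1,v_3,v_5,v_8\}$, $g=\{z,v_2,v_4,v_7,v_9\}$, $a=\{v_1,v_4,v_6,v_8,v_9\}$, $b=\{v_9,v_1,v_2,v_3,v_4\}$, and $e_i=\{v_i,v_{i+1},v_{i+2},v_{i+3},v_{i+4}\}$ for $i=1,\dots,5$. $\mathcal{H}_{ef}$ is the hypergraph with edge set $E(\mathcal H)\setminus\{e,f\}$, and $V(\mathcal H_{ef})$ is the union of its edges. A monomorphism $\phi: V(\mathcal{H}_{ef})\to V(\mathcal{H})$ is an injective map such that $\{\phi(y): y\in x\}$ is an edge of $\mathcal H$ for every edge $x$ of $\mathcal H_{ef}$. *)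

(* Defs.v *)
(* Vertices z, v_1, ..., v_9 are encoded as 'I_10 with
   z = 0 and v_i = i. *)
From mathcomp Require Import all_boot.
Set Implicit Arguments. Unset Strict Implicit. Unset Printing Implicit Defensive.

Definition vert := 'I_10.
Definition vx (i : nat) : vert := inord i.
Definition z : vert := vx 0.

Definition edge_of (l : seq nat) : {set vert} := [set x : vert | val x \in l].

Definition r_edge  := edge_of [:: 0; 1; 3; 5; 8].
Definition g_edge  := edge_of [:: 0; 2; 4; 7; 9].
Definition a_edge  := edge_of [:: 1; 4; 6; 8; 9].
Definition b_edge  := edge_of [:: 9; 1; 2; 3; 4].
Definition e_edge (i : nat) := edge_of [:: i; i+1; i+2; i+3; i+4].

Definition H_edges : seq {set vert} :=
  [:: r_edge; g_edge; a_edge; b_edge;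
      e_edge 1; e_edge 2; e_edge 3; e_edge 4; e_edge 5].

Definition Hef_edges (e f : {set vert}) : seq {set vert} :=
  [seq x <- H_edges | (x != e) && (x != f)].

Definition Hef_vertices (e f : {set vert}) : {set vert} :=
  \bigcup_(x <- Hef_edges e f) x.

(* phi : V(H_ef) -> V(H) is a monomorphism (only its values on V(H_ef) matter) *)
Definition monomorphism (e f : {set vert}) (phi : vert -> vert) : Prop :=
  {in Hef_vertices e f &, injective phi} /\
  (forall x, x \in Hef_edges e f -> phi @: x \in H_edges).

(* Main.v *)
Require Import Defs.
From mathcomp Require Import all_boot.
Definition HL : seq (seq nat) :=
  [:: [:: 0; 1; 3; 5; 8]; [:: 0; 2; 4; 7; 9]; [:: 1; 4; 6; 8; 9]; [:: 9; 1; 2; 3; 4];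
      [:: 1; 1+1; 1+2; 1+3; 1+4]; [:: 2; 2+1; 2+2; 2+3; 2+4]; [:: 3; 3+1; 3+2; 3+3; 3+4];
      [:: 4; 4+1; 4+2; 4+3; 4+4]; [:: 5; 5+1; 5+2; 5+3; 5+4]].
Definition eqe (l1 l2 : seq nat) := all (fun i => (i \in l1) == (i \in l2)) (iota 0 10).
Definition cnt (a b : seq nat) := count (fun i => (i \in a) && (i \in b)) (iota 0 10).
Definition okE (Ln t : seq (seq nat)) (h : seq nat) :=
  let x := nth [::] Ln (size t) in
  all (fun p => cnt h p.1 == cnt x p.2) (zip t (take (size t) Ln)).
Fixpoint search Ln (n : nat) : seq (seq (seq nat)) :=
  match n with
  | 0 => [:: [::]]
  | n'.+1 => flatten [seq [seq rcons t h | h <- HL & okE Ln t h] | t <- search Ln n']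
  end.
Definition cellok (Ln t : seq (seq nat)) (v w : nat) :=
  all (fun p => (w \in p.1) == (v \in p.2)) (zip t Ln).
Definition finalok Ln t :=
  has (fun v => ~~ has (fun w => cellok Ln t v w) (iota 0 10)) (undup (flatten Ln)) ||
  all (fun w => cellok Ln t 9 w ==> (w == 9)) (iota 0 10).
Definition LnOf le lf := [seq l <- HL | ~~ eqe l le && ~~ eqe l lf].
Definition bigcheck :=
  all (fun le => all (fun lf => let Ln := LnOf le lf in
    ~~ eqe le lf ==> has (eqe [:: 9; 1; 2; 3; 4]) Ln ==> has (eqe [:: 5; 5+1; 5+2; 5+3; 5+4]) Ln ==>
    (9 \in undup (flatten Ln)) && all (finalok Ln) (search Ln (size Ln))) HL) HL.
Lemma bigcheck_ok : bigcheck.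
Proof. vm_compute. reflexivity. Qed.
Lemma HL_lt10 : all (all (fun i => i < 10)) HL.
Proof. by vm_compute. Qed.

Lemma H_edgesE : H_edges = map edge_of HL. Proof. reflexivity. Qed.

Definition phin (phi : vert -> vert) (i : nat) : nat := val (phi (inord i)).

Lemma edge_ofE l1 l2 : (edge_of l1 == edge_of l2) = eqe l1 l2.
Proof.
apply/eqP/allP => [E i | H].
  rewrite mem_iota add0n => /andP[_ hi].
  have := congr1 (fun S : {set vert} => (Ordinal hi : vert) \in S) E.
  by rewrite /edge_of !inE /= => ->.
apply/setP => x; rewrite /edge_of !inE; apply/eqP; apply: H.
by rewrite mem_iota add0n ltn_ord.
Qed.

Lemma edge_eqe l1 l2 : eqe l1 l2 -> edge_of l1 = edge_of l2.
Proof. by rewrite -edge_ofE => /eqP. Qed.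

Lemma mem_edges l L : (edge_of l \in map edge_of L) = has (eqe l) L.
Proof. by elim: L => //= a L IH; rewrite in_cons edge_ofE IH. Qed.

Lemma edge_of_mem l i : i < 10 -> ((inord i : vert) \in edge_of l) = (i \in l).
Proof. by move=> hi; rewrite /edge_of inE /= inordK. Qed.

Lemma card_edge_of (P : pred nat) : #|[set x : vert | P (val x)]| = count P (iota 0 10).
Proof.
rewrite -sum1_card -sum1_count.
have -> : iota 0 10 = index_iota 0 10 by [].
rewrite big_mkord; apply: eq_bigl => i; by rewrite inE.
Qed.

Lemma cntE a b : cnt a b = #|edge_of a :&: edge_of b|.
Proof.
rewrite /cnt -card_edge_of; apply: eq_card => x; by rewrite !inE.
Qed.

Lemma imset_edge phi x : all (fun i => i < 10) x ->
  phi @: edge_of x = edge_of (map (phin phi) x).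
Proof.
move=> /allP hx; apply/setP => y; rewrite [in RHS]/edge_of inE.
apply/imsetP/mapP => [[v vin ->] | [i ix E]].
  exists (val v); first by move: vin; rewrite inE.
  by rewrite /phin inord_val.
exists (inord i); first by rewrite edge_of_mem ?hx.
by apply: val_inj; rewrite E.
Qed.

Lemma in_bigcup_seq (L : seq (seq nat)) x y :
  x \in L -> y \in edge_of x -> y \in \bigcup_(i <- map edge_of L) i.
Proof.
elim: L => //= a L IH; rewrite in_cons big_cons => /orP[/eqP -> | xL] yx; apply/setUP.
  by left.
by right; apply: IH.
Qed.

Section Main.
Variables (e f : {set vert}) (phi : vert -> vert) (Ln : seq (seq nat)).
Hypothesis HLn : Hef_edges e f = map edge_of Ln.
Hypothesis Hsub : {subset Ln <= HL}.
Hypothesis Hinj : {in Hef_vertices e f &, injective phi}.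
Hypothesis Himg : forall x, x \in Hef_edges e f -> phi @: x \in H_edges.

Lemma lt10 {x i} : x \in Ln -> i \in x -> i < 10.
Proof.
move=> /Hsub xH ix; have := allP HL_lt10 x xH; by move/allP/(_ i ix).
Qed.

Lemma sub_V {x} : x \in Ln -> edge_of x \subset Hef_vertices e f.
Proof.
move=> xL; apply/subsetP => y yx.
rewrite /Hef_vertices HLn; exact: in_bigcup_seq xL yx.
Qed.

Definition sig x := head [::] [seq h <- HL | eqe (map (phin phi) x) h].

Lemma sigP {x} : x \in Ln -> phi @: edge_of x = edge_of (sig x) /\ sig x \in HL.
Proof.
move=> xL.
have : phi @: edge_of x \in H_edges by apply: Himg; rewrite HLn map_f.
rewrite imset_edge; last by apply/allP => i; apply: lt10.
rewrite H_edgesE mem_edges has_filter /sig.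
case E: [seq h <- HL | _] => [|h t] //= _.
have : h \in [seq h <- HL | eqe [seq phin phi i | i <- x] h] by rewrite E mem_head.
rewrite mem_filter => /andP[/edge_eqe -> ->]; by [].
Qed.

Lemma cnt_sig x y : x \in Ln -> y \in Ln -> cnt (sig x) (sig y) = cnt x y.
Proof.
move=> xL yL; rewrite !cntE -(sigP xL).1 -(sigP yL).1 -imsetI.
  apply: card_in_imset => u v /setIP[ux _] /setIP[vx _].
  by apply: Hinj; apply: (subsetP (sub_V xL)).
move=> u v ux vy; apply: Hinj.
  exact: (subsetP (sub_V xL)).
exact: (subsetP (sub_V yL)).
Qed.

Lemma zip_sig s : zip (map sig s) s = map (fun y => (sig y, y)) s.
Proof. by elim: s => //= a s ->. Qed.

Lemma search_complete k : k <= size Ln -> map sig (take k Ln) \in search Ln k.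
Proof.
elim: k => [|k IH] hk; first by rewrite take0 /= mem_seq1.
rewrite (take_nth [::]) // map_rcons.
change (search Ln k.+1) with (flatten [seq [seq rcons t h | h <- HL & okE Ln t h] | t <- search Ln k]).
apply/flatten_mapP; exists (map sig (take k Ln)); first by apply: IH; apply: ltnW.
apply: map_f; rewrite mem_filter.
have xL : nth [::] Ln k \in Ln by apply: mem_nth.
rewrite (sigP xL).2 andbT /okE size_map size_takel ?(ltnW hk) //.
rewrite zip_sig all_map; apply/allP => y yin /=.
by rewrite cnt_sig // (mem_take yin).
Qed.

Lemma cell_sig v : v < 10 -> (inord v : vert) \in Hef_vertices e f ->
  cellok Ln (map sig Ln) v (phin phi v).
Proof.
move=> hv vV; rewrite /cellok zip_sig all_map; apply/allP => y yL /=.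
apply/eqP.
have -> : (phin phi v \in sig y) = (phi (inord v) \in edge_of (sig y)) by rewrite /edge_of inE.
rewrite -(sigP yL).1 -edge_of_mem //.
apply/imsetP/idP => [[u uy E] | H]; last by exists (inord v).
rewrite (Hinj _ _ vV _ E) //; exact: (subsetP (sub_V yL)).
Qed.

Lemma final9 : (9 \in undup (flatten Ln)) -> all (finalok Ln) (search Ln (size Ln)) ->
  phi (vx 9) = vx 9.
Proof.
move=> h9 hall.
have := allP hall _ (search_complete (size Ln) (leqnn _)); rewrite take_size /finalok.
have inV v : v \in undup (flatten Ln) -> v < 10 /\ (inord v : vert) \in Hef_vertices e f.
  rewrite mem_undup => /flattenP[x xL vx]; split; first exact: (lt10 xL vx).
  apply: (subsetP (sub_V xL)); by rewrite edge_of_mem // (lt10 xL vx).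
case/orP => [/hasP[v vV /hasP []] | /allP H].
  have [hv vV'] := inV v vV.
  exists (phin phi v); last exact: cell_sig.
  by rewrite mem_iota add0n /phin ltn_ord.
have [hv vV'] := inV 9 h9.
have := H (phin phi 9); rewrite mem_iota add0n /phin ltn_ord cell_sig // => /(_ isT) /eqP E.
by apply: val_inj; rewrite /vx /= inordK.
Qed.
End Main.

Theorem lemma4p7 (e f : {set vert}) (phi : vert -> vert) :
  e \in H_edges -> f \in H_edges -> e != f ->
  b_edge \in Hef_edges e f -> e_edge 5 \in Hef_edges e f ->
  monomorphism e f phi ->
  phi (vx 9) = vx 9.
Proof.
rewrite !H_edgesE => /mapP[le leH ->] /mapP[lf lfH ->] neq hb he5 [Hinj Himg].
have HLn : Hef_edges (edge_of le) (edge_of lf) = map edge_of (LnOf le lf).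
  rewrite /Hef_edges H_edgesE filter_map /LnOf; congr map; apply: eq_filter => l.
  by rewrite /preim /= !edge_ofE.
have Hsub : {subset LnOf le lf <= HL} by move=> x; rewrite mem_filter => /andP[].
move: (allP (allP bigcheck_ok le leH) lf lfH) => /=.
rewrite -edge_ofE neq /=.
move: hb he5; rewrite HLn.
change b_edge with (edge_of [:: 9; 1; 2; 3; 4]).
change (e_edge 5) with (edge_of [:: 5; 5+1; 5+2; 5+3; 5+4]).
rewrite !mem_edges => -> -> /= /andP[h9 hall].
exact: (final9 _ _ _ _ HLn Hsub Hinj Himg h9 hall).
Qed.
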